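(* Fix a prompt $\mathbf{x}$, a finite set $\mathcal{Y}$ of responses, a reference policy $\pi_{\mathrm{ref}}(\cdot\mid\mathbf{x})$ with $\pi_{\mathrm{ref}}(\mathbf{y}\mid\mathbf{x})>0$ for all $\mathbf{y}\in\mathcal{Y}$, a reward function $r(\mathbf{x},\mathbf{y})\in\mathbb{R}$, a coefficient $\beta>0$, and a differentiably parameterized family of policies $\pi_\theta(\cdot\mid\mathbf{x})$ with $\pi_\theta(\mathbf{y}\mid\mathbf{x})>0$ for all $\mathbf{y}$. Define $$w(\mathbf{x},\mathbf{y})=\frac{\exp(r(\mathbf{x},\mathbf{y})/\beta)}{\sum_{\mathbf{y}'}\pi_{\mathrm{ref}}(\mathbf{y}'\mid\mathbf{x})\exp(r(\mathbf{x},\mathbf{y}')/\beta)},\qquad \hat w(\mathbf{x},\mathbf{y})=\frac{\pi_\theta(\mathbf{y}\mid\mathbf{x})/\pi_{\mathrm{ref}}(\mathbf{y}\mid\mathbf{x})}{\sum_{\mathbf{y}'}\pi_{\mathrm{ref}}(\mathbf{y}'\mid\mathbf{x})\,\big(\pi_\theta(\mathbf{y}'\mid\mathbf{x})/\pi_{\mathrm{ref}}(\mathbf{y}'\mid\mathbf{x})\big)},$$ and let $$\mathcal{L}_1(\theta)=-\mathbb{E}_{\mathbf{y}\sim\pi_{\mathrm{ref}}(\cdot\mid\mathbf{x})}\big[w(\mathbf{x},\mathbf{y})\log \hat w(\mathbf{x},\mathbf{y})\big]$$ (the first term of the Cal-DPO population loss) and $$\mathcal{L}_{\mathrm{MLE}}(\theta)=-\mathbb{E}_{\mathbf{y}\sim\pi_{\mathrm{ref}}(\cdot\mid\mathbf{x})}\big[w(\mathbf{x},\mathbf{y})\log\pi_\theta(\mathbf{y}\mid\mathbf{x})\big].$$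 Then minimizing $\mathcal{L}_1$ over $\theta$ is equivalent to minimizing $\mathcal{L}_{\mathrm{MLE}}$, i.e. to minimizing the forward KL divergence $\mathbb{D}_{\mathrm{KL}}[\pi^*(\cdot\mid\mathbf{x})\,\|\,\pi_\theta(\cdot\mid\mathbf{x})]$ (the two objectives differ by a quantity not depending on $\theta$), and the negative gradient of $\mathcal{L}_1$ has the contrastive form $$-\nabla_\theta\mathcal{L}_1(\theta)=\mathbb{E}_{\mathbf{y}\sim\pi_{\mathrm{ref}}(\cdot\mid\mathbf{x})}\Big[\big(w(\mathbf{x},\mathbf{y})-\hat w(\mathbf{x},\mathbf{y})\big)\nabla_\theta\log\pi_\theta(\mathbf{y}\mid\mathbf{x})\Big].$$
   Context: Here $\pi^*(\mathbf{y}\mid\mathbf{x})=\pi_{\mathrm{ref}}(\mathbf{y}\mid\mathbf{x})\exp(r(\mathbf{x},\mathbf{y})/\beta)/Z(\mathbf{x})$ with $Z(\mathbf{x})=\sum_{\mathbf{y}}\pi_{\mathrm{ref}}(\mathbf{y}\mid\mathbf{x})\exp(r(\mathbf{x},\mathbf{y})/\beta)$ is the optimal KL-regularized policy, so that $w(\mathbf{x},\mathbf{y})=\pi^*(\mathbf{y}\mid\mathbf{x})/\pi_{\mathrm{ref}}(\mathbf{y}\mid\mathbf{x})$. Expectations over $\pi_{\mathrm{ref}}$ are finite sums $\sum_{\mathbf{y}\in\mathcal{Y}}\pi_{\mathrm{ref}}(\mathbf{y}\mid\mathbf{x})(\cdot)$. *)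

(* Defs.v *)
(* The prompt x is fixed throughout and therefore
   left implicit: every quantity below is "at the fixed prompt x". *)
From HB Require Import structures.
From mathcomp Require Import all_boot all_order all_algebra.
From mathcomp Require Import all_classical all_reals all_analysis.
Set Implicit Arguments. Unset Strict Implicit. Unset Printing Implicit Defensive.
Import Order.TTheory GRing.Theory Num.Theory.
Import numFieldNormedType.Exports.
Local Open Scope ring_scope.

Section CalDPO.
Variables (R : realType) (Y : finType) (d : nat).

Definition Zpart (pref r : Y -> R) (beta : R) : R :=
  \sum_(y : Y) pref y * expR (r y / beta).

Definition wgt (pref r : Y -> R) (beta : R) (y : Y) : R :=
  expR (r y / beta) / Zpart pref r beta.

(* optimal KL-regularized policy pi^* *)
Definition pistar (pref r : Y -> R) (beta : R) (y : Y) : R :=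
  pref y * expR (r y / beta) / Zpart pref r beta.

Definition what (pref : Y -> R) (pi : 'rV[R]_d -> Y -> R)
    (th : 'rV[R]_d) (y : Y) : R :=
  (pi th y / pref y) / \sum_(y' : Y) pref y' * (pi th y' / pref y').

Definition L1 (pref r : Y -> R) (beta : R) (pi : 'rV[R]_d -> Y -> R)
    (th : 'rV[R]_d) : R :=
  - \sum_(y : Y) pref y * (wgt pref r beta y * ln (what pref pi th y)).

Definition LMLE (pref r : Y -> R) (beta : R) (pi : 'rV[R]_d -> Y -> R)
    (th : 'rV[R]_d) : R :=
  - \sum_(y : Y) pref y * (wgt pref r beta y * ln (pi th y)).

Definition KL (p q : Y -> R) : R :=
  \sum_(y : Y) p y * ln (p y / q y).

Definition grad (f : 'rV[R]_d -> R) (th : 'rV[R]_d) : 'rV[R]_d :=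
  \row_(i < d) ('D_(delta_mx 0 i) f th).

End CalDPO.

(* Main.v *)
Require Import Defs.
From HB Require Import structures.
From mathcomp Require Import all_boot all_order all_algebra.
From mathcomp Require Import all_classical all_reals all_analysis.
From mathcomp Require Import ring lra.
Import Order.TTheory GRing.Theory Num.Theory.
Import numFieldNormedType.Exports.
Local Open Scope ring_scope.

Lemma is_derive_bigsum (R : realType) (V : normedModType R) (I : Type) (s : seq I)
  (f : I -> V -> R) x v :
  (forall y, derivable (f y) x v) ->
  is_derive x v (fun t => \sum_(y <- s) f y t) (\sum_(y <- s) 'D_v (f y) x).
Proof.
move=> df; elim: s => [|a s IH].
  rewrite big_nil.
  have -> : (fun t => \sum_(y <- [::]) f y t) = cst 0.
    by apply/funext => t; rewrite big_nil.
  exact: is_derive_cst.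
rewrite big_cons.
have -> : (fun t => \sum_(y <- a :: s) f y t) = f a + (fun t => \sum_(y <- s) f y t).
  by apply/funext => t; rewrite big_cons.
have := derivableP (df a).
move=> H1.
exact: is_deriveD.
Qed.

Lemma derive_ln_comp (R : realType) (V : normedModType R) (g : V -> R) x v :
  differentiable g x -> 0 < g x ->
  derivable (fun t => ln (g t)) x v /\
  'D_v (fun t => ln (g t)) x = (g x)^-1 * 'D_v g x.
Proof.
move=> dg gx.
have dln : differentiable (@ln R) (g x).
  apply/derivable1_diffP; apply: ex_derive; exact: is_derive1_ln.
have dc : differentiable ((@ln R) \o g) x by exact: differentiable_comp.
split; first exact: diff_derivable.
rewrite (deriveE v dc) diff_comp // (deriveE v dg) /= diff1E //.
rewrite derive1E; have [_ ->] := is_derive1_ln gx.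
by rewrite /GRing.scale /= mulrC.
Qed.
Theorem theorem1 (R : realType) (Y : finType) (d : nat)
  (pref r : Y -> R) (beta : R) (pi : 'rV[R]_d -> Y -> R) :
  (forall y, 0 < pref y) ->
  \sum_(y : Y) pref y = 1 ->
  0 < beta ->
  (forall th y, 0 < pi th y) ->
  (forall th, \sum_(y : Y) pi th y = 1) ->
  (forall y th, differentiable (fun t => pi t y) th) ->
  [/\ (exists C : R, forall th, L1 pref r beta pi th = LMLE pref r beta pi th + C),
      (exists C : R, forall th,
          LMLE pref r beta pi th = KL (pistar pref r beta) (pi th) + C),
      (forall th0, (forall th, L1 pref r beta pi th0 <= L1 pref r beta pi th) <->
                   (forall th, KL (pistar pref r beta) (pi th0)
                               <= KL (pistar pref r beta) (pi th)))
    & (forall th,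
        - grad (L1 pref r beta pi) th =
        \sum_(y : Y) pref y *: ((wgt pref r beta y - what pref pi th y)
                                *: grad (fun t => ln (pi t y)) th))].
Proof.
move=> pref0 pref1 beta0 pi0 pi1 dpi.
have [y0 _] : exists y0 : Y, true.
  case: (pickP (xpredT : pred Y)) => [y0 _|H]; first by exists y0.
  move: pref1; rewrite big_pred0 // => /eqP; rewrite eq_sym oner_eq0.
  done.
have Z0 : 0 < Zpart pref r beta.
  rewrite /Zpart (bigD1 y0) //=.
  have A : 0 < pref y0 * expR (r y0 / beta) by rewrite mulr_gt0 // expR_gt0.
  have B : 0 <= \sum_(i | i != y0) pref i * expR (r i / beta).
    by apply: sumr_ge0 => i _; rewrite mulr_ge0 // ?expR_ge0 // ltW.
  lra.
have whatE th y : what pref pi th y = pi th y / pref y.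
  rewrite /what.
  have -> : \sum_(y' : Y) pref y' * (pi th y' / pref y') = 1.
    rewrite -(pi1 th); apply: eq_bigr => y' _.
    by rewrite mulrCA divff ?mulr1 // gt_eqF.
  by rewrite divr1.
have lnwhat th y : ln (what pref pi th y) = ln (pi th y) - ln (pref y).
  by rewrite whatE ln_div // posrE.
set C1 := \sum_(y : Y) pref y * (wgt pref r beta y * ln (pref y)).
have L1E th : L1 pref r beta pi th = LMLE pref r beta pi th + C1.
  rewrite /L1 /LMLE /C1 (eq_bigr (fun y => pref y * (wgt pref r beta y * ln (pi th y)) - pref y * (wgt pref r beta y * ln (pref y)))); last first.
    by move=> y _; rewrite lnwhat; ring.
  by rewrite sumrB opprB addrC.
have pistarE y : pistar pref r beta y = pref y * wgt pref r beta y.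
  by rewrite /pistar /wgt mulrA.
have pistar0 y : 0 < pistar pref r beta y.
  by rewrite /pistar divr_gt0 // mulr_gt0 // expR_gt0.
set C2 := - \sum_(y : Y) pistar pref r beta y * ln (pistar pref r beta y).
have KLE th : KL (pistar pref r beta) (pi th) =
    \sum_(y : Y) pistar pref r beta y * ln (pistar pref r beta y)
    - \sum_(y : Y) pistar pref r beta y * ln (pi th y).
  rewrite /KL -sumrB; apply: eq_bigr => y _.
  rewrite ln_div ?posrE ?pistar0 ?pi0 //; ring.
have LME th : LMLE pref r beta pi th = KL (pistar pref r beta) (pi th) + C2.
  rewrite KLE /C2 /LMLE.
  rewrite (eq_bigr (fun y => pistar pref r beta y * ln (pi th y)) (F1 := fun y => pref y * (wgt pref r beta y * ln (pi th y)))); last first.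
    by move=> y _; rewrite pistarE mulrA.
  ring.
split.
- by exists C1.
- by exists C2.
- move=> th0; split => H th; have := H th; rewrite !L1E !LME; lra.
move=> th.
set c := fun y : Y => - (pref y * wgt pref r beta y).
set g := fun (y : Y) (t : 'rV[R]_d) => ln (pi t y).
have L1f : L1 pref r beta pi =
    (fun t => \sum_(y <- index_enum Y) (c y \*: g y) t) + cst C1.
  apply/funext => t; rewrite L1E /LMLE /= -sumrN; congr (_ + _).
  by apply: eq_bigr => y _; rewrite /c /g /= /GRing.scale /= mulrA mulNr.
apply/rowP => i; rewrite !mxE summxE.
set v := delta_mx 0 i.
have dg y : derivable (g y) th v /\
    'D_v (g y) th = (pi th y)^-1 * 'D_v (fun t => pi t y) th.
  exact: derive_ln_comp.
have Hs : is_derive th v (fun t => \sum_(y <- index_enum Y) (c y \*: g y) t)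
    (\sum_(y <- index_enum Y) 'D_v (c y \*: g y) th).
  apply: is_derive_bigsum => y; apply: derivableZ; exact: (dg y).1.
have HL : is_derive th v (L1 pref r beta pi)
    (\sum_(y <- index_enum Y) 'D_v (c y \*: g y) th + 0).
  rewrite L1f; exact: is_deriveD.
have Hp : is_derive th v (fun t => \sum_(y <- index_enum Y) pi t y)
    (\sum_(y <- index_enum Y) 'D_v (fun t => pi t y) th).
  apply: is_derive_bigsum => y; exact: diff_derivable.
have Hp0 : \sum_(y <- index_enum Y) 'D_v (fun t => pi t y) th = 0.
  case: Hp => _ <-.
  have -> : (fun t => \sum_(y <- index_enum Y) pi t y) = cst 1.
    by apply/funext => t; rewrite pi1.
  exact: derive_cst.
case: HL => _ ->; rewrite addr0 -sumrN.
have -> : \sum_(y <- index_enum Y) - 'D_v (c y \*: g y) th =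
  \sum_(y <- index_enum Y) (pref y * ((wgt pref r beta y - what pref pi th y) * 'D_v (g y) th)
    + 'D_v (fun t => pi t y) th).
  apply: eq_bigr => y _.
  rewrite deriveZ; last exact: (dg y).1.
  rewrite (dg y).2 whatE /c /GRing.scale /=.
  field; apply/andP; split; exact: lt0r_neq0.
rewrite big_split /= Hp0 addr0; apply: eq_bigr => y _.
by rewrite !mxE.
Qed.
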